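(* Let $\phi_1,\dots,\phi_m:\{0,1\}^{\mathbb Z^d}\to\{0,1\}$ be non-constant local monotone maps and suppose there is a linear polar function $\mathcal L:\mathbb R^d\to\mathbb R^\sigma$ of dimension $\sigma\ge2$ with $\sum_{s=1}^\sigma\inf_{1\le k\le m}\varepsilon_{\phi_k}(\mathcal L_s)>0$. Then there exist a linear polar function $\mathcal L':\mathbb R^d\to\mathbb R^{\sigma'}$ of dimension $\sigma'\ge2$ and a vector $v\in\mathbb R^d$ such that $\varepsilon^v_{\phi_k}(\mathcal L'_s)>0$ for all $1\le s\le\sigma'$ and $1\le k\le m$.
   Context: A map $\phi:\{0,1\}^{\mathbb Z^d}\to\{0,1\}$ is local if it depends on finitely many coordinates and monotone if $x\le y$ implies $\phi(x)\le\phi(y)$. A minimal one-set of $\phi$ is a finite $A\subset\mathbb Z^d$ with $\phi(1_A)=1$ such that no proper subset has this property; $\mathcal A(\phi)$ is the set of minimal one-sets. A linear polar function of dimension $\sigma$ is a linear map $\mathcal L:\mathbb R^d\to\mathbb R^\sigma$ with $\sum_{s=1}^\sigma\mathcal L_s(z)=0$ for all $z$. For a linear form $\ell$ and $v\in\mathbb R^d$, the edge speed is $\varepsilon_\phi(\ell):=\sup_{A\in\mathcal A(\phi)}\inf_{i\in A}\ell(i)$ and the compensated edge speed is $\varepsilon^v_\phi(\ell):=\sup_{A\in\mathcal A(\phi)}\inf_{i\in A}\ell(i-v)$. *)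

(* Defs.v *)
From HB Require Import structures.
From mathcomp Require Import all_boot all_order all_algebra.
From mathcomp Require Import boolp classical_sets functions cardinality reals ereal.
Set Implicit Arguments. Unset Strict Implicit. Unset Printing Implicit Defensive.
Import Order.TTheory GRing.Theory Num.Theory.
Local Open Scope classical_set_scope.
Local Open Scope ring_scope.

Definition point (d : nat) := 'rV[int]_d.
Definition config (d : nat) := point d -> bool.

Definition local d (phi : config d -> bool) : Prop :=
  exists S : set (point d), finite_set S /\
    forall x y : config d, (forall i, S i -> x i = y i) -> phi x = phi y.

Definition monotone d (phi : config d -> bool) : Prop :=
  forall x y : config d, (forall i, x i ==> y i) -> phi x ==> phi y.

Definition nonconstant d (phi : config d -> bool) : Prop :=
  exists x y : config d, phi x != phi y.

Definition indic d (A : set (point d)) : config d := fun i => `[< A i >].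

Definition minimal_one_set d (phi : config d -> bool) (A : set (point d)) : Prop :=
  finite_set A /\ phi (indic A) /\
  forall B : set (point d), B `<` A -> finite_set B -> phi (indic B) = false.

Definition embed (R : realType) d (i : point d) : 'rV[R]_d := map_mx (fun z : int => z%:~R) i.

Definition edge_speed (R : realType) d (phi : config d -> bool) (ell : 'rV[R]_d -> R) : \bar R :=
  ereal_sup [set ereal_inf [set (ell (embed R i))%:E | i in A]
            | A in [set A | minimal_one_set phi A]].

Definition comp_edge_speed (R : realType) d (phi : config d -> bool)
    (ell : 'rV[R]_d -> R) (v : 'rV[R]_d) : \bar R :=
  ereal_sup [set ereal_inf [set (ell (embed R i - v))%:E | i in A]
            | A in [set A | minimal_one_set phi A]].

(* A linear map L : R^d -> R^sigma, given by its matrix (z |-> z *m L);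
   its s-th component L_s is a linear form. *)
Definition comp_form (R : realType) d sigma (L : 'M[R]_(d, sigma)) (s : 'I_sigma)
  : 'rV[R]_d -> R := fun z => (z *m L) 0 s.

Definition linear_polar (R : realType) d sigma (L : 'M[R]_(d, sigma)) : Prop :=
  forall z : 'rV[R]_d, \sum_(s < sigma) comp_form L s z = 0.

(* Main.v *)
Require Import Defs.
From HB Require Import structures.
From mathcomp Require Import all_boot all_order all_algebra.
From mathcomp Require Import boolp classical_sets functions cardinality reals ereal.
From mathcomp Require Import ring lra zify.
Import Order.TTheory GRing.Theory Num.Theory.
Local Open Scope classical_set_scope.
Local Open Scope ring_scope.
Lemma choose_reals (R : realType) n (E : 'I_n -> \bar R) :
  (0 < \sum_(s < n) E s)%E -> (0 < n)%N ->
  exists a : 'I_n -> R, (forall s, (a s)%:E < E s)%E /\ 0 < \sum_(s < n) a s.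
Proof.
move=> Hpos n0.
have noNy : forall s, E s != -oo%E.
  move=> s; apply/negP => /eqP Es.
  by move: Hpos; rewrite (bigD1 s) //= Es addNye.
pose T : R := 1 + \sum_(s < n) `|fine (E s)|.
pose b s : R := if E s == +oo%E then T else fine (E s).
have bE s : ((b s)%:E <= E s)%E.
  rewrite /b; case: (E s) (noNy s) => [r| |] //= _; by rewrite ?leey ?lexx.
have T0 : 0 <= T by rewrite /T; apply: addr_ge0 => //; apply: sumr_ge0 => *.
have bge s : - `|fine (E s)| <= b s.
  rewrite /b; case: ifP => _; last by rewrite lerNnormlW.
  by apply: le_trans T0; rewrite oppr_le0.
have bpos : 0 < \sum_(s < n) b s.
  have [[s0 Hs0]|] := pselect (exists s, E s = +oo%E).
    rewrite (bigD1 s0) //= /b Hs0 eqxx.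
    have : - \sum_(s < n | s != s0) `|fine (E s)| <= \sum_(s < n | s != s0) b s.
      by rewrite -sumrN; apply: ler_sum => s _; apply: bge.
    have : \sum_(s < n | s != s0) `|fine (E s)| <= \sum_(s < n) `|fine (E s)|.
      by rewrite [X in _ <= X](bigD1 s0) //= lerDr.
    rewrite /T; lra.
  move=> Hno.
  have Hb : forall s, (b s)%:E = E s.
    move=> s; rewrite /b; case: ifP => [/eqP h|/negbT h]; first by exfalso; apply: Hno; exists s.
    by move: (noNy s) h; case: (E s).
  by rewrite -lte_fin -sumEFin; under eq_bigr do rewrite Hb.
pose eta := (\sum_(s < n) b s) / (2 * n%:R).
have nR : 0 < n%:R :> R by rewrite ltr0n.
have eta0 : 0 < eta by rewrite /eta divr_gt0 // mulr_gt0.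
exists (fun s => b s - eta); split.
  move=> s; apply: lt_le_trans (bE s); rewrite lte_fin; lra.
rewrite sumrB sumr_const card_ord -mulr_natr /eta.
have -> : (\sum_(s < n) b s) / (2 * n%:R) * n%:R = (\sum_(s < n) b s) / 2.
  by field; rewrite pnatr_eq0 -lt0n n0.
lra.
Qed.

Section Lin.
Variables (R : realType) (d sg : nat) (L : 'M[R]_(d, sg)) (a : 'I_sg -> R).
Definition dep (nu : 'I_sg -> R) := forall i, \sum_s L i s * nu s = 0.
Definition good nu := (forall s, 0 <= nu s) /\ dep nu /\ 0 < \sum_s nu s * a s.
Definition supp (nu : 'I_sg -> R) := #|[pred s | nu s != 0]|.

Lemma dep_lin nu rho t : dep nu -> dep rho -> dep (fun s => nu s - t * rho s).
Proof.
move=> Hn Hr i; under eq_bigr do rewrite mulrBr mulrCA.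
by rewrite sumrB -mulr_sumr Hn Hr mulr0 subr0.
Qed.

Lemma suma_lin nu rho t : \sum_s (nu s - t * rho s) * a s =
   \sum_s nu s * a s - t * \sum_s rho s * a s.
Proof.
under eq_bigr do rewrite mulrBl -mulrA.
by rewrite sumrB -mulr_sumr.
Qed.

Lemma key nu : good nu -> (forall nu', good nu' -> (supp nu <= supp nu')%N) ->
  forall rho, dep rho -> (forall s, nu s = 0 -> rho s = 0) ->
  exists c, forall s, rho s = c * nu s.
Proof.
move=> [nu0 [dnu apos]] Hmin.
have H : forall r, dep r -> \sum_s r s * a s = 0 -> (forall s, nu s = 0 -> r s = 0) ->
    forall s0, 0 < r s0 -> False.
  move=> r dr ar sr s0 rs0.
  case: (@arg_minP _ _ _ s0 (fun s => 0 < r s) (fun s => nu s / r s) rs0).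
  move=> s1 rs1 Hs1.
  set t := nu s1 / r s1.
  have nus1 : nu s1 != 0.
    by apply/eqP => h; move: rs1; rewrite (sr _ h) ltxx.
  have t0 : 0 <= t by rewrite /t divr_ge0 // ltW.
  pose nu' := fun s => nu s - t * r s.
  have g' : good nu'.
    split; [|split].
    - move=> s; rewrite /nu' subr_ge0.
      have [rsp|rsn] := ltP 0 (r s).
        by have := Hs1 s rsp; rewrite /t ler_pdivlMr // mulrAC -ler_pdivlMr.
      by apply: le_trans (nu0 s); rewrite mulr_ge0_le0.
    - exact: dep_lin.
    - by rewrite /nu' suma_lin ar mulr0 subr0.
  have := Hmin _ g'; rewrite leqNgt => /negP; apply; apply: proper_card.
  apply/properP; split.
    apply/fintype.subsetP => s; rewrite !inE; apply: contra => /eqP h.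
    by rewrite /nu' h (sr _ h) mulr0 subrr.
  exists s1; first by rewrite inE.
  by rewrite inE negbK /nu' /t divfK ?subrr // gt_eqF.
move=> rho drho srho.
set c := (\sum_s rho s * a s) / (\sum_s nu s * a s).
exists c.
pose r := fun s => rho s - c * nu s.
have dr : dep r by exact: dep_lin.
have ar : \sum_s r s * a s = 0.
  by rewrite /r suma_lin /c divfK ?subrr // gt_eqF.
have sr : forall s, nu s = 0 -> r s = 0 by move=> s h; rewrite /r h srho // mulr0 subrr.
move=> s; apply/eqP; rewrite -subr_eq0; apply/eqP.
have [rp|] := ltP 0 (r s); first by exfalso; exact: (H r dr ar sr s rp).
rewrite le_eqVlt => /orP [/eqP //|rn].
exfalso; apply: (H (fun s => - r s)) (s) _.
- by move=> i; under eq_bigr do rewrite mulrN; rewrite sumrN dr oppr0.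
- by under eq_bigr do rewrite mulNr; rewrite sumrN ar oppr0.
- by move=> s' h; rewrite sr // oppr0.
- by rewrite oppr_gt0.
Qed.
End Lin.
Arguments dep {R d sg} L nu.
Arguments good {R d sg} L a nu.
Arguments supp {R sg} nu.

Lemma sum_S (R : realType) sg (nu F : 'I_sg -> R) :
  (forall s, nu s = 0 -> F s = 0) ->
  \sum_s F s = \sum_(j < #|[pred s | nu s != 0]|) F (enum_val j).
Proof.
move=> H; rewrite -big_enum_val [RHS]big_mkcond /=; apply: eq_bigr => s _.
by rewrite inE; case: eqP => // /H ->.
Qed.

Lemma lin_main (R : realType) d sg (L : 'M[R]_(d, sg)) (a : 'I_sg -> R) :
  linear_polar L -> 0 < \sum_s a s ->
  (forall s, (forall i, L i s = 0) -> a s <= 0) ->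
  exists n (L' : 'M[R]_(d, n)) (v : 'rV[R]_d), (2 <= n)%N /\ linear_polar L' /\
   forall j, exists s w eps, 0 < w /\ 0 < eps /\
     (forall z, comp_form L' j z = w * comp_form L s z) /\
     comp_form L' j v + eps <= w * a s.
Proof.
move=> pol apos zc.
have dep1 : dep L (fun _ => 1).
  move=> i; have h := pol (delta_mx 0 i); rewrite /comp_form -rowE in h.
  by apply: (etrans _ h); apply: eq_bigr => s _; rewrite mulr1 mxE.
have good1 : good L a (fun _ => 1).
  split; [by move=> _; rewrite ler01|split => //].
  by under eq_bigr do rewrite mul1r.
have exP : exists k, `[< exists nu, good L a nu /\ supp nu = k >].
  by exists (supp (fun _ : 'I_sg => 1 : R)); apply/asboolP; exists (fun _ => 1).
case: (ex_minnP exP) => k /asboolP [nu [gnu snu]] kmin.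
have nmin : forall nu', good L a nu' -> (supp nu <= supp nu')%N.
  by move=> nu' g'; rewrite snu; apply: kmin; apply/asboolP; exists nu'.
have [nu0 [dnu anu]] := gnu.
pose S := [pred s | nu s != 0].
pose e := fun j : 'I_#|S| => (enum_val j : 'I_sg).
have eS : forall j, nu (e j) != 0.
  by move=> j; have := enum_valP j; rewrite inE.
have epos : forall j, 0 < nu (e j) by move=> j; rewrite lt_def eS nu0.
have n2 : (2 <= #|S|)%N.
  rewrite leqNgt; apply/negP => hn.
  have jj : forall j j' : 'I_#|S|, j = j'.
    by move=> [j hj] [j' hj'] /=; apply/val_inj => /=; lia.
  have : \sum_s nu s * a s <= 0.
    rewrite (@sum_S _ _ nu); last by move=> s ->; rewrite mul0r.
    apply: sumr_le0 => j _; rewrite pmulr_rle0 //; apply: zc => i.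
    have := dnu i; rewrite (@sum_S _ _ nu); last by move=> s ->; rewrite mulr0.
    rewrite (bigD1 j) //= big1 ?addr0; last by move=> j' /eqP []; rewrite (jj j' j).
    by move/eqP; rewrite mulf_eq0 (negbTE (eS j)) orbF => /eqP.
  by rewrite leNgt anu.
pose L' : 'M[R]_(d, #|S|) := \matrix_(i, j) (nu (e j) * L i (e j)).
have L'E : forall z j, comp_form L' j z = nu (e j) * comp_form L (e j) z.
  move=> z j; rewrite /comp_form !mxE mulr_sumr; apply: eq_bigr => i _.
  by rewrite mxE mulrCA.
pose j0 : 'I_#|S| := Ordinal (ltnW n2).
have x0S : e j0 \in S by exact: enum_valP.
pose h := enum_rank_in x0S.
have hK : forall j, h (e j) = j by move=> j; rewrite /h /e enum_valK_in.
pose sn := \sum_j nu (e j).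
have sn0 : 0 < sn.
  rewrite /sn (bigD1 j0) //=; apply: lt_le_trans (epos j0) _; rewrite lerDl.
  by apply: sumr_ge0 => j _; exact: ltW.
pose SA := \sum_j nu (e j) * a (e j).
have SAE : SA = \sum_s nu s * a s.
  by rewrite /SA (@sum_S _ _ nu) // => s ->; rewrite mul0r.
pose del := SA / sn.
have del0 : 0 < del by rewrite /del divr_gt0 // SAE.
pose Y : 'rV[R]_#|S| := \row_j (nu (e j) * (a (e j) - del)).
have YL : (Y <= L')%MS.
  rewrite submxE; apply/eqP; apply/matrixP => i0 kk; rewrite !mxE.
  pose rho := fun j => (cokermx L' j kk : R).
  have dL' : forall i, \sum_j L' i j * rho j = 0.
    move=> i; have := mulmx_coker L'; move/matrixP/(_ i kk).
    by rewrite !mxE.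
  pose rt := fun s => if s \in S then nu s * rho (h s) else 0.
  have drt : dep L rt.
    move=> i; rewrite (@sum_S _ _ nu); last first.
      by move=> s hs; rewrite /rt inE hs eqxx /= mulr0.
    apply: (etrans _ (dL' i)); apply: eq_bigr => j _.
    rewrite /rt (enum_valP j).
    rewrite (hK j) mxE /e; ring.
  have srt : forall s, nu s = 0 -> rt s = 0.
    by move=> s hs; rewrite /rt inE hs eqxx.
  have [c Hc] := @key _ _ _ L a nu gnu nmin rt drt srt.
  have rc : forall j, rho j = c.
    move=> j; have := Hc (e j); rewrite /rt enum_valP hK mulrC.
    by move/mulIf; apply; exact: eS.
  under eq_bigr do rewrite -/(rho _) rc mxE.
  rewrite -mulr_suml mulrC.
  under eq_bigr do rewrite mulrBr.
  rewrite sumrB -mulr_suml -/SA -/sn /del.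
  by rewrite [sn * _]mulrC divfK ?subrr ?mulr0 // gt_eqF.
case/submxP: YL => v Yv.
exists #|S|, L', v; split => //; split.
  move=> z; rewrite /comp_form.
  have -> : \sum_s (z *m L') 0 s = \sum_s \sum_i z 0 i * L i s * nu s.
    rewrite (eq_bigr (fun j => nu (e j) * comp_form L (e j) z)); last first.
      by move=> j _; exact: L'E.
    rewrite [RHS](@sum_S _ _ nu); last by move=> s ->; apply: big1 => i _; rewrite mulr0.
    apply: eq_bigr => j _; rewrite /comp_form mxE mulr_sumr; apply: eq_bigr => i _.
    by rewrite /e; ring.
  rewrite exchange_big /=; apply: big1 => i _.
  under eq_bigr do rewrite -mulrA.
  by rewrite -mulr_sumr dnu mulr0.
move=> j; exists (e j), (nu (e j)), (nu (e j) * del); split => //; split.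
  exact: mulr_gt0.
split => //.
have -> : comp_form L' j v = Y 0 j by rewrite /comp_form Yv.
by rewrite mxE mulrBr subrK.
Qed.
Theorem mainTheorem6 (R : realType) (d m : nat) (phi : 'I_m -> config d -> bool) :
  (forall k, local (phi k)) ->
  (forall k, monotone (phi k)) ->
  (forall k, nonconstant (phi k)) ->
  forall (sigma : nat) (L : 'M[R]_(d, sigma)),
    (2 <= sigma)%N -> linear_polar L ->
    (0 < \sum_(s < sigma)
           ereal_inf [set edge_speed (phi k) (comp_form L s) | k in [set: 'I_m]])%E ->
  exists (sigma' : nat) (L' : 'M[R]_(d, sigma')) (v : 'rV[R]_d),
    (2 <= sigma')%N /\ linear_polar L' /\
    forall (s : 'I_sigma') (k : 'I_m),
      (0 < comp_edge_speed (phi k) (comp_form L' s) v)%E.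

Proof.
case: m phi => [|m] phi lok mon ncst sg L sg2 pol hsum.
  exists 2%N, 0, 0; split => //; split; last by move=> s [].
  by move=> z; apply: big1 => s _; rewrite /comp_form mulmx0 mxE.
pose E := fun s => ereal_inf [set edge_speed (phi k) (comp_form L s) | k in [set: 'I_m.+1]].
have [a [aE apos]] := @choose_reals R sg E hsum (ltnW sg2).
have P1 : forall k s, exists A, minimal_one_set (phi k) A /\ (exists i, A i) /\
    forall i, A i -> a s < comp_form L s (embed R i).
  move=> k s.
  have h1 : ((a s)%:E < edge_speed (phi k) (comp_form L s))%E.
    apply: lt_le_trans (aE s) _; apply: ereal_inf_lbound; by exists k.
  have [y [A mA <-] ay] := ereal_sup_gt h1.
  exists A; split => //; split.
    apply: contrapT => nA.
    have [x [y' xy]] := ncst k.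
    have allT : forall x, phi k x.
      move=> x'; have := mon k (indic A) x'.
      have -> : phi k (indic A) by case: mA => _ [].
      apply => i; rewrite /indic asboolF //= => Ai; apply: nA; by exists i.
    by move: xy; rewrite !allT.
  move=> i Ai; rewrite -lte_fin; apply: lt_le_trans ay _.
  by apply: ereal_inf_lbound; exists i.
have zc : forall s, (forall i, L i s = 0) -> a s <= 0.
  move=> s hs; have [A [_ [[i Ai] HA]]] := P1 ord0 s.
  have := HA i Ai; rewrite /comp_form mxE big1 => [h|l _]; last by rewrite hs mulr0.
  exact: ltW.
have [n [L' [v [n2 [pol' Hj]]]]] := @lin_main R d sg L a pol apos zc.
exists n, L', v; split => //; split => // s k.
have [s0 [w [eps [w0 [eps0 [HL' Hv]]]]]] := Hj s.
have [A [mA [_ HA]]] := P1 k s0.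
apply: (@lt_le_trans _ _ eps%:E); first by rewrite lte_fin.
apply: le_ereal_sup_tmp; exists (ereal_inf [set (comp_form L' s (embed R i - v))%:E | i in A]).
  by exists A.
apply: le_ereal_inf_tmp => _ [i Ai <-]; rewrite lee_fin.
have -> : comp_form L' s (embed R i - v) = comp_form L' s (embed R i) - comp_form L' s v.
  by rewrite /comp_form mulmxBl !mxE.
rewrite HL'.
have := HA i Ai => hi.
have : w * a s0 <= w * comp_form L s0 (embed R i) by rewrite ler_pM2l // ltW.
lra.
Qed.
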